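(* Let $\lambda$ be a nonzero real number. For every integer $n\ge0$, \[ \sum_{k=0}^{n}(-1)^{k}\,2^{-k-1}\,k!\,S_{2,\lambda}(n,k)=\frac{1}{n+1}\Big(\beta_{n+1,\lambda}-2^{n+1}\beta_{n+1,\frac{\lambda}{2}}\Big). \]
   Context: For nonzero real $\lambda$: $(x)_{0,\lambda}=1$, $(x)_{n,\lambda}=x(x-\lambda)\cdots(x-(n-1)\lambda)$ for $n\ge1$, and $(x)_k=x(x-1)\cdots(x-k+1)$. The degenerate Stirling numbers of the second kind $S_{2,\lambda}(n,k)$ are defined by $(x)_{n,\lambda}=\sum_{k=0}^{n}S_{2,\lambda}(n,k)(x)_{k}$. The degenerate Bernoulli numbers $\beta_{n,\mu}$ (for nonzero real $\mu$) are defined by $\frac{t}{e_{\mu}(t)-1}=\sum_{n=0}^{\infty}\beta_{n,\mu}\frac{t^{n}}{n!}$ with $e_\mu(t)=(1+\mu t)^{1/\mu}$; here $\mu=\lambda$ or $\mu=\lambda/2$. *)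

(* Defs.v *)
From Stdlib Require Import Reals.
From Coquelicot Require Import Coquelicot.
Open Scope R_scope.

Fixpoint gfall (x lam : R) (n : nat) : R :=
  match n with
  | O => 1
  | S m => gfall x lam m * (x - INR m * lam)
  end.

Definition falling (x : R) (k : nat) : R := gfall x 1 k.

Definition is_deg_stirling2 (lam : R) (S2 : nat -> nat -> R) : Prop :=
  forall (n : nat) (x : R),
    gfall x lam n = sum_f_R0 (fun k => S2 n k * falling x k) n.

Definition e_deg (mu t : R) : R := Rpower (1 + mu * t) (/ mu).

(* generating function t / (e_mu(t) - 1), extended by its limit 1 at t = 0 *)
Definition deg_bern_gf (mu : R) (t : R) : R :=
  if Req_EM_T t 0 then 1 else t / (e_deg mu t - 1).

(* beta_{n,mu} = n! * [t^n] (t/(e_mu(t)-1)) = n-th derivative at 0 *)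
Definition deg_bernoulli (n : nat) (mu : R) : R :=
  Derive_n (deg_bern_gf mu) n 0.

(* Main.v *)
Require Import Defs.
From Stdlib Require Import Reals Lra Lia.
From Coquelicot Require Import Coquelicot.
Open Scope R_scope.

Fixpoint binom (n k : nat) : nat :=
  match n, k with
  | _, O => 1%nat
  | O, S _ => 0%nat
  | S n', S k' => (binom n' k' + binom n' (S k'))%nat
  end.

Lemma binom_gt n k : (n < k)%nat -> binom n k = 0%nat.
Proof.
  revert k; induction n as [|n IH]; intros [|k] H; simpl; try lia.
  rewrite !IH; lia.
Qed.

Lemma binom_n0 n : binom n 0 = 1%nat.
Proof. destruct n; reflexivity. Qed.

Definition Bp k j := match j with O => 0%nat | S j' => binom k j' end.

Lemma binom_S k j : binom (S k) j = (binom k j + Bp k j)%nat.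
Proof. destruct j; simpl; [rewrite binom_n0|]; lia. Qed.

Lemma sgnS k j : (j <= k)%nat -> (-1) ^ (S k - j) = - (-1) ^ (k - j).
Proof. intros H. rewrite Nat.sub_succ_l by exact H. simpl. ring. Qed.

Definition Tk (k : nat) (phi : nat -> R) : R :=
  sum_f_R0 (fun j => INR (binom k j) * (-1) ^ (k - j) * phi j) k.

Lemma Tk_S k phi : Tk (S k) phi = Tk k (fun j => phi (S j) - phi j).
Proof.
  unfold Tk.
  rewrite (sum_eq _ (fun j => INR (binom k j) * (-1) ^ (S k - j) * phi j +
                              INR (Bp k j) * (-1) ^ (S k - j) * phi j))
    by (intros i _; rewrite binom_S, plus_INR; ring).
  rewrite plus_sum.
  rewrite tech5. rewrite (binom_gt k (S k)) by lia. rewrite (decomp_sum (fun j => INR (Bp k j) * (-1) ^ (S k - j) * phi j)) by lia. simpl Nat.pred.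
  simpl (Bp k 0). 
  rewrite (sum_eq (fun j => INR (binom k j) * (-1) ^ (S k - j) * phi j)
     (fun j => - (INR (binom k j) * (-1) ^ (k - j) * phi j)))
    by (intros i Hi; rewrite sgnS by exact Hi; ring).
  rewrite (sum_eq (fun i => INR (Bp k (S i)) * (-1) ^ (S k - S i) * phi (S i))
     (fun j => INR (binom k j) * (-1) ^ (k - j) * phi (S j)))
    by (intros i Hi; reflexivity).
  rewrite (sum_eq (fun j => INR (binom k j) * (-1) ^ (k - j) * (phi (S j) - phi j))
     (fun j => INR (binom k j) * (-1) ^ (k - j) * phi (S j) +
               - (INR (binom k j) * (-1) ^ (k - j) * phi j)))
    by (intros i Hi; ring).
  rewrite plus_sum. simpl INR. ring.
Qed.

Lemma Tk_ext k phi psi : (forall j, (j <= k)%nat -> phi j = psi j) -> Tk k phi = Tk k psi.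
Proof. intros H; unfold Tk; apply sum_eq; intros i Hi; rewrite H by exact Hi; reflexivity. Qed.

Lemma Tk_scal k c phi : Tk k (fun j => c * phi j) = c * Tk k phi.
Proof. unfold Tk. rewrite scal_sum. apply sum_eq; intros; ring. Qed.

Lemma Tk_minus k phi psi : Tk k (fun j => phi j - psi j) = Tk k phi - Tk k psi.
Proof. unfold Tk. rewrite <- minus_sum. apply sum_eq; intros; ring. Qed.

Lemma falling_S x m : falling x (S m) = falling x m * (x - INR m).
Proof. unfold falling; simpl; ring. Qed.

Lemma falling_shift x m : falling (x + 1) (S m) = (x + 1) * falling x m.
Proof.
  induction m as [|m IH].
  - rewrite falling_S. unfold falling; simpl; ring.
  - rewrite falling_S, IH, (falling_S x m), S_INR. ring.
Qed.

Lemma falling_diff x m : falling (x + 1) (S m) - falling x (S m) = INR (S m) * falling x m.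
Proof. rewrite falling_shift, falling_S, S_INR. ring. Qed.

Lemma falling_0 m : falling 0 m = if Nat.eqb m 0 then 1 else 0.
Proof.
  induction m as [|m IH]; [reflexivity|].
  rewrite falling_S, IH. destruct m; simpl; ring.
Qed.

Lemma Dk k : forall m, Tk k (fun j => falling (INR j) m) = if Nat.eqb m k then INR (Factorial.fact k) else 0.
Proof.
  induction k as [|k IH]; intros m.
  - unfold Tk; simpl. rewrite falling_0. destruct m; simpl; ring.
  - rewrite Tk_S. destruct m as [|m].
    + rewrite (Tk_ext _ _ (fun j => 0 * 1)).
      * rewrite Tk_scal. simpl; ring.
      * intros j _. unfold falling; simpl; ring.
    + rewrite (Tk_ext _ _ (fun j => INR (S m) * falling (INR j) m)).
      * rewrite Tk_scal, IH. simpl Nat.eqb. destruct (Nat.eqb m k) eqn:E.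
        -- apply Nat.eqb_eq in E; subst. rewrite fact_simpl, mult_INR. ring.
        -- ring.
      * intros j _. rewrite S_INR at 1. rewrite falling_diff. reflexivity.
Qed.

Definition bet (mu x : R) (n : nat) : R := gfall x mu n / INR (Factorial.fact n).

Lemma bet_0 mu x : bet mu x 0 = 1.
Proof. unfold bet; simpl; field. Qed.

Lemma bet_rec mu x n : INR (S n) * bet mu x (S n) = (x - INR n * mu) * bet mu x n.
Proof.
  unfold bet. simpl gfall. rewrite fact_simpl, mult_INR.
  field. split; [apply INR_fact_neq_0| apply not_0_INR; lia].
Qed.

Lemma bet_S mu x n : bet mu x (S n) = (x - INR n * mu) * bet mu x n / INR (S n).
Proof.
  rewrite <- bet_rec. field. apply not_0_INR; lia.
Qed.

Lemma vdm_step mu x y n :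
  INR (S n) * PS_mult (bet mu x) (bet mu y) (S n) =
  (x + y - INR n * mu) * PS_mult (bet mu x) (bet mu y) n.
Proof.
  unfold PS_mult.
  rewrite scal_sum.
  rewrite (sum_eq _ (fun k => INR k * bet mu x k * bet mu y (S n - k) +
                              bet mu x k * (INR (S n - k) * bet mu y (S n - k)))).
  2:{ intros i Hi. rewrite (Rmult_comm _ (INR (S n))).
      replace (INR (S n)) with (INR i + INR (S n - i)) at 1 by (rewrite minus_INR by lia; ring).
      ring. }
  rewrite plus_sum.
  rewrite (decomp_sum (fun k => INR k * bet mu x k * bet mu y (S n - k))) by lia.
  rewrite tech5. simpl Nat.pred. rewrite Nat.sub_diag. simpl INR at 1.
  rewrite (sum_eq (fun i => INR (S i) * bet mu x (S i) * bet mu y (S n - S i))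
                  (fun i => (x - INR i * mu) * bet mu x i * bet mu y (n - i))).
  2:{ intros i Hi. rewrite bet_rec. replace (S n - S i)%nat with (n - i)%nat by lia. ring. }
  rewrite (sum_eq (fun k => bet mu x k * (INR (S n - k) * bet mu y (S n - k)))
                  (fun k => bet mu x k * ((y - INR (n - k) * mu) * bet mu y (n - k)))).
  2:{ intros i Hi. rewrite Nat.sub_succ_l by lia. rewrite bet_rec. reflexivity. }
  rewrite scal_sum.
  rewrite Rmult_0_l, Rmult_0_l, Rplus_0_l.
  simpl INR. rewrite ?Rmult_0_l, ?Rmult_0_r, ?Rplus_0_r.
  rewrite <- plus_sum. apply sum_eq. intros i Hi. rewrite minus_INR by lia. ring.
Qed.

Lemma vdm mu x y n : PS_mult (bet mu x) (bet mu y) n = bet mu (x + y) n.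
Proof.
  induction n as [|n IH].
  - unfold PS_mult; simpl. rewrite !bet_0. ring.
  - assert (H : INR (S n) <> 0) by (apply not_0_INR; lia).
    apply (Rmult_eq_reg_l (INR (S n))); [|exact H].
    rewrite vdm_step, bet_rec, IH. ring.
Qed.

Lemma sum_swap (g : nat -> nat -> R) M N :
  sum_f_R0 (fun i => sum_f_R0 (fun k => g i k) M) N =
  sum_f_R0 (fun k => sum_f_R0 (fun i => g i k) N) M.
Proof.
  induction N as [|N IH]; simpl; [reflexivity|].
  rewrite IH, <- plus_sum. reflexivity.
Qed.

Lemma telescope (u : nat -> R) n : sum_f_R0 (fun k => u k - u (S k)) n = u 0%nat - u (S n).
Proof. induction n as [|n IH]; simpl; [ring|rewrite IH; ring]. Qed.

Lemma sum_delta (a : nat -> R) k n :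
  sum_f_R0 (fun m => if Nat.eqb m k then a m else 0) n = if Nat.leb k n then a k else 0.
Proof.
  induction n as [|n IH].
  - simpl. destruct k; simpl; reflexivity.
  - rewrite tech5, IH.
    destruct (Nat.eqb (S n) k) eqn:E.
    + apply Nat.eqb_eq in E; subst.
      rewrite (proj2 (Nat.leb_gt (S n) n)) by lia. rewrite Nat.leb_refl. ring.
    + destruct (Nat.leb k n) eqn:E2.
      * apply Nat.leb_le in E2. rewrite (proj2 (Nat.leb_le k (S n))) by lia. ring.
      * apply Nat.leb_gt in E2. apply Nat.eqb_neq in E.
        rewrite (proj2 (Nat.leb_gt k (S n))) by lia. ring.
Qed.

Lemma Tk_sum k (g : nat -> nat -> R) N :
  Tk k (fun j => sum_f_R0 (fun m => g m j) N) = sum_f_R0 (fun m => Tk k (g m)) N.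
Proof.
  unfold Tk.
  rewrite (sum_eq _ (fun j => sum_f_R0 (fun m => INR (binom k j) * (-1) ^ (k - j) * g m j) N)).
  - apply sum_swap.
  - intros i _. rewrite scal_sum. apply sum_eq; intros; ring.
Qed.

Definition Ek (lam : R) (k n : nat) : R := Tk k (fun j => bet lam (INR j) n).

Lemma Ek_S2 lam S2 k n : is_deg_stirling2 lam S2 ->
  Ek lam k n * INR (Factorial.fact n) =
  if Nat.leb k n then INR (Factorial.fact k) * S2 n k else 0.
Proof.
  intros HS. unfold Ek.
  rewrite Rmult_comm, <- Tk_scal.
  rewrite (Tk_ext _ _ (fun j => sum_f_R0 (fun m => S2 n m * falling (INR j) m) n)).
  2:{ intros j _. rewrite <- HS. unfold bet. field. apply INR_fact_neq_0. }
  rewrite Tk_sum.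
  rewrite (sum_eq _ (fun m => if Nat.eqb m k then INR (Factorial.fact k) * S2 n m else 0)).
  - rewrite sum_delta. reflexivity.
  - intros m _. rewrite Tk_scal, Dk. destruct (Nat.eqb m k) eqn:E; [|ring].
    apply Nat.eqb_eq in E; subst; ring.
Qed.

Lemma gfall_0 mu n : gfall 0 mu (S n) = 0.
Proof. induction n as [|n IH]; simpl in *; [ring|rewrite IH; ring]. Qed.

Lemma Ek_0 lam n : Ek lam 0 n = if Nat.eqb n 0 then 1 else 0.
Proof.
  unfold Ek, Tk, sum_f_R0, bet. destruct n.
  - simpl; field.
  - change (INR 0) with 0. rewrite gfall_0. simpl Nat.eqb. simpl binom. simpl pow. unfold Rdiv. ring.
Qed.

Definition Ac (lam : R) (n : nat) : R := bet lam 1 n - if Nat.eqb n 0 then 1 else 0.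

Lemma PS_mult_delta_l (b : nat -> R) n :
  PS_mult (fun i => if Nat.eqb i 0 then 1 else 0) b n = b n.
Proof.
  unfold PS_mult. destruct n.
  - simpl; ring.
  - rewrite decomp_sum by lia. simpl Nat.pred.
    rewrite (sum_eq _ (fun _ => 0)) by (intros; simpl; ring).
    rewrite sum_cte. simpl Nat.eqb. replace (S n - 0)%nat with (S n) by lia. ring.
Qed.

Lemma Ek_rec lam k n : PS_mult (Ac lam) (Ek lam k) n = Ek lam (S k) n.
Proof.
  unfold PS_mult, Ek.
  rewrite (sum_eq _ (fun i => Tk k (fun j => Ac lam i * bet lam (INR j) (n - i)))).
  2:{ intros i _. rewrite Tk_scal. reflexivity. }
  rewrite <- Tk_sum. rewrite Tk_S. apply Tk_ext. intros j _.
  unfold Ac.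
  rewrite (sum_eq _ (fun i => bet lam 1 i * bet lam (INR j) (n - i) -
     (if Nat.eqb i 0 then 1 else 0) * bet lam (INR j) (n - i))) by (intros; ring).
  rewrite minus_sum.
  change (sum_f_R0 (fun i => bet lam 1 i * bet lam (INR j) (n - i)) n) with
    (PS_mult (bet lam 1) (bet lam (INR j)) n).
  change (sum_f_R0 (fun i => (if Nat.eqb i 0 then 1 else 0) * bet lam (INR j) (n - i)) n) with
    (PS_mult (fun i => if Nat.eqb i 0 then 1 else 0) (bet lam (INR j)) n).
  rewrite vdm, PS_mult_delta_l, S_INR, Rplus_comm. reflexivity.
Qed.

Definition wk (k : nat) : R := (-1) ^ k / 2 ^ (k + 1).
Definition cp (lam : R) (n : nat) : R := sum_f_R0 (fun k => wk k * Ek lam k n) n.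
Definition Dc (lam : R) (n : nat) : R :=
  match n with O => 2 | S m => bet lam 1 (S m) end.


Lemma Ek_gt lam S2 (HS : is_deg_stirling2 lam S2) k n : (n < k)%nat -> Ek lam k n = 0.
Proof.
  intros H. pose proof (Ek_S2 lam S2 k n HS) as E.
  rewrite (proj2 (Nat.leb_gt k n)) in E by lia.
  apply Rmult_integral in E. destruct E as [E|E]; [exact E|].
  exfalso; apply (INR_fact_neq_0 n); exact E.
Qed.

Lemma cp_N lam S2 (HS : is_deg_stirling2 lam S2) n N : (n <= N)%nat -> cp lam n = sum_f_R0 (fun k => wk k * Ek lam k n) N.
Proof.
  intros H. induction H as [|N H IH]; [reflexivity|].
  rewrite tech5, <- IH, (Ek_gt lam S2 HS) by lia. ring.
Qed.

Lemma cp_inv lam S2 (HS : is_deg_stirling2 lam S2) n : PS_mult (Dc lam) (cp lam) n = if Nat.eqb n 0 then 1 else 0.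
Proof.
  assert (E1 : PS_mult (Dc lam) (cp lam) n =
     2 * cp lam n + PS_mult (Ac lam) (cp lam) n).
  { unfold PS_mult.
    rewrite (sum_eq (fun k => Dc lam k * cp lam (n - k))
       (fun k => 2 * (if Nat.eqb k 0 then 1 else 0) * cp lam (n - k) + Ac lam k * cp lam (n - k))).
    2:{ intros [|i] _; unfold Dc, Ac; [rewrite bet_0|]; simpl; ring. }
    rewrite plus_sum. f_equal.
    pose proof (PS_mult_delta_l (cp lam) n) as D. unfold PS_mult in D.
    rewrite <- D, scal_sum. apply sum_eq; intros; ring. }
  assert (E2 : PS_mult (Ac lam) (cp lam) n = sum_f_R0 (fun k => wk k * Ek lam (S k) n) n).
  { unfold PS_mult.
    rewrite (sum_eq _ (fun i => sum_f_R0 (fun k => Ac lam i * (wk k * Ek lam k (n - i))) n)).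
    2:{ intros i Hi. rewrite (cp_N lam S2 HS (n - i) n) by lia. rewrite scal_sum. apply sum_eq; intros; ring. }
    rewrite sum_swap. apply sum_eq. intros k _.
    rewrite <- Ek_rec. unfold PS_mult. rewrite scal_sum. apply sum_eq; intros; ring. }
  rewrite E1, E2. unfold cp. rewrite scal_sum, <- plus_sum.
  set (u := fun k => 2 * wk k * Ek lam k n).
  rewrite (sum_eq _ (fun k => u k - u (S k))).
  - rewrite telescope. unfold u. rewrite Ek_0, (Ek_gt lam S2 HS (S n) n) by lia.
    rewrite !Rmult_0_r. unfold wk. destruct n; simpl; field.
  - intros i _. unfold u, wk. rewrite !Nat.add_1_r. simpl pow. field. apply pow_nonzero; lra.
Qed.


Lemma inv_unique (p c1 c2 : nat -> R) : p 0%nat <> 0 ->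
  (forall n, PS_mult p c1 n = if Nat.eqb n 0 then 1 else 0) ->
  (forall n, PS_mult p c2 n = if Nat.eqb n 0 then 1 else 0) ->
  forall n, c1 n = c2 n.
Proof.
  intros Hp H1 H2.
  assert (forall m k, (k <= m)%nat -> c1 k = c2 k).
  { induction m as [|m IH]; intros k Hk.
    - assert (k = 0%nat) by lia; subst.
      pose proof (H1 0%nat) as A; pose proof (H2 0%nat) as B.
      unfold PS_mult in A, B; simpl in A, B.
      apply (Rmult_eq_reg_l (p 0%nat)); [lra|exact Hp].
    - destruct (Nat.eq_dec k (S m)) as [->|Hne]; [|apply IH; lia].
      pose proof (H1 (S m)) as A; pose proof (H2 (S m)) as B.
      unfold PS_mult in A, B.
      rewrite decomp_sum in A, B by lia. simpl Nat.pred in A, B.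
      rewrite (sum_eq (fun i => p (S i) * c1 (S m - S i)%nat)
          (fun i => p (S i) * c2 (S m - S i)%nat)) in A.
      2:{ intros i Hi. rewrite IH by lia. reflexivity. }
      apply (Rmult_eq_reg_l (p 0%nat)); [|exact Hp].
      rewrite Nat.sub_0_r in A, B. lra. }
  intros n; apply (H n n); lia.
Qed.

Lemma radius_bound (a : nat -> R) C K : 0 < K ->
  (forall n, Rabs (a n) <= C * K ^ n) ->
  forall x, Rabs x < / K -> Rbar_lt (Rabs x) (CV_radius a).
Proof.
  intros HK Hb x Hx.
  assert (H : Rbar_le (/ K) (CV_radius a)).
  { destruct (CV_radius_bounded a) as [Hub _]. apply Hub.
    exists C. intros n. rewrite Rabs_mult, <- RPow_abs.
    rewrite (Rabs_pos_eq (/ K)) by (left; apply Rinv_0_lt_compat; exact HK).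
    apply Rle_trans with (C * K ^ n * (/ K) ^ n).
    - apply Rmult_le_compat_r; [apply pow_le; left; apply Rinv_0_lt_compat; exact HK|apply Hb].
    - rewrite Rmult_assoc, <- Rpow_mult_distr, Rinv_r by lra. rewrite pow1. lra. }
  eapply Rbar_lt_le_trans; [|exact H]. simpl. exact Hx.
Qed.

Fixpoint invl (p : nat -> R) (n : nat) : nat -> R :=
  match n with
  | O => fun _ => / p 0%nat
  | S m => fun k => if Nat.leb k m then invl p m k
                   else - / p 0%nat * sum_f_R0 (fun i => p (S i) * invl p m (m - i)%nat) m
  end.

Definition pinv (p : nat -> R) (n : nat) : R := invl p n n.

Lemma invl_le p m k : (k <= m)%nat -> invl p m k = pinv p k.
Proof.
  revert k; induction m as [|m IH]; intros k Hk.
  - assert (k = 0%nat) by lia; subst; reflexivity.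
  - simpl. destruct (Nat.leb k m) eqn:E.
    + apply Nat.leb_le in E. apply IH; exact E.
    + assert (k = S m) by (apply Nat.leb_gt in E; lia). subst.
      unfold pinv; cbn -[Nat.leb]. rewrite E. reflexivity.
Qed.

Lemma pinv_0 p : pinv p 0 = / p 0%nat.
Proof. reflexivity. Qed.

Lemma pinv_S p m : pinv p (S m) = - / p 0%nat * sum_f_R0 (fun i => p (S i) * pinv p (m - i)%nat) m.
Proof.
  unfold pinv at 1; cbn -[Nat.leb]. rewrite (proj2 (Nat.leb_gt (S m) m) (Nat.lt_succ_diag_r m)). f_equal.
  apply sum_eq; intros i Hi. rewrite invl_le by lia. reflexivity.
Qed.

Lemma pinv_inv p : p 0%nat <> 0 -> forall n, PS_mult p (pinv p) n = if Nat.eqb n 0 then 1 else 0.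
Proof.
  intros Hp [|m].
  - unfold PS_mult; simpl. rewrite pinv_0. field. exact Hp.
  - unfold PS_mult. rewrite decomp_sum by lia. simpl Nat.pred. simpl Nat.eqb.
    rewrite Nat.sub_0_r, pinv_S.
    replace (sum_f_R0 (fun i => p (S i) * pinv p (S m - S i)%nat) m) with (sum_f_R0 (fun i => p (S i) * pinv p (m - i)%nat) m) by reflexivity. field. exact Hp.
Qed.

Lemma pinv_bound p M L : p 0%nat <> 0 -> 0 < M -> 0 < L ->
  (forall n, Rabs (p n) <= M * L ^ n) ->
  forall n, Rabs (pinv p n) <= / Rabs (p 0%nat) * (L * ((Rabs (p 0%nat) + M) / Rabs (p 0%nat))) ^ n.
Proof.
  intros Hp HM HL Hb.
  set (a := Rabs (p 0%nat)).
  assert (Ha : 0 < a) by (apply Rabs_pos_lt; exact Hp).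
  set (s := a / (a + M)).
  assert (Hs0 : 0 < s) by (unfold s; apply Rdiv_lt_0_compat; lra).
  assert (Hs1 : s < 1) by (unfold s; apply Rmult_lt_reg_r with (a + M); [lra|]; unfold Rdiv; rewrite Rmult_assoc, Rinv_l by lra; lra).
  set (K := L * ((a + M) / a)).
  assert (HK : L = s * K) by (unfold s, K; field; lra).
  assert (HK0 : 0 < K) by (unfold K; apply Rmult_lt_0_compat; [lra|apply Rdiv_lt_0_compat; lra]).
  fold K.
  assert (Hgeo : forall m, sum_f_R0 (fun i => s ^ S i) m <= a / M).
  { intros m. rewrite (sum_eq _ (fun i => s ^ i * s)) by (intros; simpl; ring).
    rewrite <- scal_sum, tech3 by lra.
    apply Rle_trans with (s * (1 / (1 - s))).
    - apply Rmult_le_compat_l; [lra|]. unfold Rdiv. apply Rmult_le_compat_r.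
      + left; apply Rinv_0_lt_compat; lra.
      + pose proof (pow_lt s (S m) Hs0); lra.
    - right. unfold s. field. lra.
    }
  assert (H : forall m k, (k <= m)%nat -> Rabs (pinv p k) <= / a * K ^ k).
  { induction m as [|m IH]; intros k Hk.
    - assert (k = 0%nat) by lia. subst k. rewrite pinv_0. simpl. rewrite Rabs_inv. fold a. lra.
    - destruct (Nat.eq_dec k (S m)) as [->|Hne]; [|apply IH; lia].
      rewrite pinv_S, Rabs_mult, Rabs_Ropp, Rabs_inv. fold a.
      apply Rmult_le_compat_l; [left; apply Rinv_0_lt_compat; exact Ha|].
      eapply Rle_trans; [apply Rsum_abs|].
      apply Rle_trans with (sum_f_R0 (fun i => M * / a * K ^ S m * s ^ S i) m).
      + apply sum_Rle. intros i Hi. rewrite Rabs_mult.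
        apply Rle_trans with (M * L ^ S i * (/ a * K ^ (m - i))).
        * apply Rmult_le_compat; try apply Rabs_pos; [apply Hb| apply IH; lia].
        * right. rewrite HK, Rpow_mult_distr.
          replace (K ^ S m) with (K ^ S i * K ^ (m - i)) by (rewrite <- pow_add; f_equal; lia). ring.
      + rewrite (sum_eq _ (fun i => s ^ S i * (M * / a * K ^ S m))) by (intros; ring). rewrite <- scal_sum.
        apply Rle_trans with (M * / a * K ^ S m * (a / M)).
        * apply Rmult_le_compat_l; [|apply Hgeo].
          apply Rmult_le_pos; [apply Rmult_le_pos; [lra|left; apply Rinv_0_lt_compat; lra]|].
          apply pow_le; lra.
        * right. field. lra. }
  intros n. apply (H n n). lia.
Qed.

Lemma PSeries_delta x : PSeries (fun n => if Nat.eqb n 0 then 1 else 0) x = 1.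
Proof.
  rewrite PSeries_decr_1.
  - simpl. rewrite (PSeries_ext _ (fun _ => 0)) by (intros; reflexivity).
    rewrite PSeries_const_0. ring.
  - apply CV_radius_inside.
    apply (radius_bound _ 1 (/ (Rabs x + 1))).
    + apply Rinv_0_lt_compat. pose proof (Rabs_pos x); lra.
    + intros [|n]; simpl.
      * rewrite Rabs_R1; lra.
      * rewrite Rabs_R0. rewrite Rmult_1_l. apply Rmult_le_pos.
        -- left; apply Rinv_0_lt_compat; pose proof (Rabs_pos x); lra.
        -- apply pow_le. left; apply Rinv_0_lt_compat; pose proof (Rabs_pos x); lra.
    + rewrite Rinv_inv. lra.
Qed.

Definition recK (p : nat -> R) M L := L * ((Rabs (p 0%nat) + M) / Rabs (p 0%nat)).

Lemma recK_pos p M L : p 0%nat <> 0 -> 0 < M -> 0 < L -> 0 < recK p M L.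
Proof.
  intros Hp HM HL. pose proof (Rabs_pos_lt _ Hp). unfold recK.
  apply Rmult_lt_0_compat; [lra|apply Rdiv_lt_0_compat; lra].
Qed.

Lemma recK_ge p M L : p 0%nat <> 0 -> 0 < M -> 0 < L -> / recK p M L < / L.
Proof.
  intros Hp HM HL. pose proof (Rabs_pos_lt _ Hp). apply Rinv_lt_contravar.
  - apply Rmult_lt_0_compat; [lra|apply recK_pos; auto].
  - unfold recK. rewrite <- (Rmult_1_r L) at 1. apply Rmult_lt_compat_l; [lra|].
    apply Rmult_lt_reg_r with (Rabs (p 0%nat)); [lra|].
    unfold Rdiv. rewrite Rmult_assoc, Rinv_l by lra. lra.
Qed.

Lemma recip_rad p M L : p 0%nat <> 0 -> 0 < M -> 0 < L ->
  (forall n, Rabs (p n) <= M * L ^ n) ->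
  forall x, Rabs x < / recK p M L ->
  Rbar_lt (Rabs x) (CV_radius p) /\ Rbar_lt (Rabs x) (CV_radius (pinv p)).
Proof.
  intros Hp HM HL Hb x Hx. split.
  - apply (radius_bound p M L HL Hb). pose proof (recK_ge p M L Hp HM HL). lra.
  - apply (radius_bound (pinv p) (/ Rabs (p 0%nat)) (recK p M L)).
    + apply recK_pos; auto.
    + apply pinv_bound; auto.
    + exact Hx.
Qed.

Lemma recip_eq p M L : p 0%nat <> 0 -> 0 < M -> 0 < L ->
  (forall n, Rabs (p n) <= M * L ^ n) ->
  forall x, Rabs x < / recK p M L -> PSeries p x * PSeries (pinv p) x = 1.
Proof.
  intros Hp HM HL Hb x Hx.
  destruct (recip_rad p M L Hp HM HL Hb x Hx) as [H1 H2].
  rewrite <- PSeries_mult by assumption.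
  rewrite (PSeries_ext _ _ _ (pinv_inv p Hp)). apply PSeries_delta.
Qed.

Lemma bet_bound mu n : Rabs (bet mu 1 n) <= 1 * (1 + Rabs mu) ^ n.
Proof.
  rewrite Rmult_1_l.
  induction n as [|n IH].
  - rewrite bet_0, Rabs_R1. simpl; lra.
  - rewrite bet_S. unfold Rdiv. rewrite !Rabs_mult.
    rewrite Rabs_inv, (Rabs_pos_eq (INR (S n))) by apply pos_INR.
    assert (HS : 0 < INR (S n)) by (apply lt_0_INR; lia).
    assert (H1 : Rabs (1 - INR n * mu) <= INR (S n) * (1 + Rabs mu)).
    { eapply Rle_trans; [apply Rabs_triang|]. rewrite Rabs_Ropp, Rabs_R1, Rabs_mult.
      rewrite (Rabs_pos_eq (INR n)) by apply pos_INR. rewrite S_INR.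
      pose proof (pos_INR n); pose proof (Rabs_pos mu). nra. }
    simpl pow.
    apply Rle_trans with (INR (S n) * (1 + Rabs mu) * (1 + Rabs mu) ^ n * / INR (S n)).
    + apply Rmult_le_compat_r; [left; apply Rinv_0_lt_compat; lra|].
      apply Rmult_le_compat; try apply Rabs_pos; assumption.
    + right. field. lra.
Qed.

Definition rmu (mu : R) := / (1 + Rabs mu).

Lemma rmu_pos mu : 0 < rmu mu.
Proof. unfold rmu. apply Rinv_0_lt_compat. pose proof (Rabs_pos mu); lra. Qed.

Lemma bet_rad mu t : Rabs t < rmu mu -> Rbar_lt (Rabs t) (CV_radius (bet mu 1)).
Proof.
  intros H. apply (radius_bound _ 1 (1 + Rabs mu)).
  - pose proof (Rabs_pos mu); lra.
  - apply bet_bound.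
  - exact H.
Qed.

Lemma rmu_pos_base mu t : Rabs t < rmu mu -> 0 < 1 + mu * t.
Proof.
  intros H. unfold rmu in H.
  assert (Hm : 0 <= Rabs mu) by apply Rabs_pos.
  assert (Rabs (mu * t) < 1).
  { rewrite Rabs_mult.
    apply Rle_lt_trans with (Rabs mu * / (1 + Rabs mu)).
    - apply Rmult_le_compat_l; [lra|left; exact H].
    - apply Rmult_lt_reg_r with (1 + Rabs mu); [lra|].
      rewrite Rmult_assoc, Rinv_l by lra. lra. }
  destruct (Rabs_def2 _ _ H0). lra.
Qed.

Lemma ode_coef mu t : mu <> 0 -> Rbar_lt (Rabs t) (CV_radius (bet mu 1)) ->
  PSeries (PS_derive (bet mu 1)) t + mu * (t * PSeries (PS_derive (bet mu 1)) t)
  = PSeries (bet mu 1) t.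
Proof.
  intros Hmu Ht.
  set (b := bet mu 1).
  rewrite <- PSeries_incr_1, <- PSeries_scal.
  rewrite <- PSeries_plus.
  - apply PSeries_ext. intros [|k].
    + transitivity (INR 1 * b 1%nat + mu * 0); [reflexivity|].
      unfold b. rewrite bet_S, bet_0. simpl. field.
    + transitivity (INR (S (S k)) * b (S (S k)) + mu * (INR (S k) * b (S k))); [reflexivity|].
      unfold b. rewrite bet_rec. rewrite (S_INR k). ring.
  - apply ex_pseries_derive. exact Ht.
  - apply CV_radius_inside. rewrite CV_radius_scal by exact Hmu.
    rewrite CV_radius_incr_1, CV_radius_derive. exact Ht.
Qed.

Lemma e_deg_series mu t : mu <> 0 -> Rabs t < rmu mu -> e_deg mu t = PSeries (bet mu 1) t.
Proof.
  intros Hmu Ht.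
  set (P := PSeries (bet mu 1)).
  set (E := fun u => exp (- (/ mu * ln (1 + mu * u)))).
  set (psi := fun u => P u * E u).
  assert (Hd : forall u, Rabs u < rmu mu -> is_derive psi u 0).
  { intros u Hu.
    pose proof (rmu_pos_base mu u Hu) as Hpos.
    pose proof (bet_rad mu u Hu) as Hrad.
    assert (HE : is_derive E u (- E u / (1 + mu * u))).
    { unfold E. auto_derive; [exact Hpos|]. field. split; lra. }
    pose proof (is_derive_PSeries _ _ Hrad) as HP.
    pose proof (is_derive_mult P E u _ _ HP HE) as HM.
    unfold psi. 
    replace 0 with (plus (mult (PSeries (PS_derive (bet mu 1)) u) (E u)) (mult (P u) (- E u / (1 + mu * u)))).
    - apply HM. intros; apply Rmult_comm.
    - unfold plus, mult; simpl.
      pose proof (ode_coef mu u Hmu Hrad) as Hc. fold P in Hc.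
      rewrite <- Hc. field. lra. }
  assert (Hc : psi t - psi 0 = 0).
  { destruct (MVT_gen psi 0 t (fun _ => 0)) as [c [_ Hc]].
    - intros x Hx. apply Hd.
      assert (Rabs x <= Rabs t).
      { unfold Rmin, Rmax in Hx. destruct (Rle_dec 0 t).
        - rewrite !Rabs_pos_eq; lra.
        - rewrite !Rabs_left; lra. }
      lra.
    - intros x Hx. apply derivable_continuous_pt.
      exists 0. apply is_derive_Reals. apply Hd.
      assert (Rabs x <= Rabs t).
      { unfold Rmin, Rmax in Hx. destruct (Rle_dec 0 t).
        - destruct (Rle_dec 0 x); [rewrite !Rabs_pos_eq; lra|rewrite Rabs_left, Rabs_pos_eq; lra].
        - destruct (Rle_dec 0 x); [rewrite Rabs_pos_eq, Rabs_left; lra|rewrite !Rabs_left; lra]. }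
      lra.
    - rewrite Hc. ring. }
  assert (H0 : psi 0 = 1).
  { unfold psi, P, E. rewrite PSeries_0, bet_0. rewrite Rmult_0_r, Rplus_0_r, ln_1.
    rewrite Rmult_0_r, Ropp_0, exp_0. ring. }
  assert (H1 : P t * E t = 1) by (unfold psi in Hc, H0; lra).
  unfold e_deg, Rpower.
  assert (HE : E t = / exp (/ mu * ln (1 + mu * t))) by (unfold E; apply exp_Ropp).
  rewrite HE in H1.
  pose proof (exp_pos (/ mu * ln (1 + mu * t))).
  fold P. apply (Rmult_eq_reg_r (/ exp (/ mu * ln (1 + mu * t)))).
  - rewrite H1, Rinv_r by lra. reflexivity.
  - apply Rinv_neq_0_compat; lra.
Qed.

Definition qc (mu : R) (n : nat) : R := bet mu 1 (S n).

Lemma qc_0 mu : qc mu 0 = 1.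
Proof. unfold qc. rewrite bet_S, bet_0. simpl. field. Qed.

Lemma qc_bound mu n : Rabs (qc mu n) <= (1 + Rabs mu) * (1 + Rabs mu) ^ n.
Proof. unfold qc. pose proof (bet_bound mu (S n)). simpl in H. lra. Qed.

Lemma L_pos mu : 0 < 1 + Rabs mu.
Proof. pose proof (Rabs_pos mu); lra. Qed.

Lemma qc_ne0 mu : qc mu 0 <> 0.
Proof. rewrite qc_0; lra. Qed.

Definition rq (mu : R) := Rmin (rmu mu) (/ recK (qc mu) (1 + Rabs mu) (1 + Rabs mu)).

Lemma rq_pos mu : 0 < rq mu.
Proof.
  unfold rq. apply Rmin_pos; [apply rmu_pos|].
  apply Rinv_0_lt_compat. apply recK_pos; [apply qc_ne0|apply L_pos|apply L_pos].
Qed.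

Lemma e_decomp mu t : mu <> 0 -> Rabs t < rmu mu -> e_deg mu t = 1 + t * PSeries (qc mu) t.
Proof.
  intros Hmu Ht. rewrite e_deg_series by assumption.
  rewrite PSeries_decr_1.
  - rewrite bet_0. reflexivity.
  - apply CV_radius_inside. apply bet_rad. exact Ht.
Qed.

Lemma Q_recip mu t : Rabs t < rq mu -> PSeries (qc mu) t * PSeries (pinv (qc mu)) t = 1.
Proof.
  intros Ht. apply (recip_eq _ (1 + Rabs mu) (1 + Rabs mu)); [apply qc_ne0|apply L_pos|apply L_pos| |].
  - intros n. apply qc_bound.
  - unfold rq in Ht. pose proof (Rmin_r (rmu mu) (/ recK (qc mu) (1 + Rabs mu) (1 + Rabs mu))). lra.
Qed.

Lemma rq_rmu mu t : Rabs t < rq mu -> Rabs t < rmu mu.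
Proof. intros H. unfold rq in H. pose proof (Rmin_l (rmu mu) (/ recK (qc mu) (1 + Rabs mu) (1 + Rabs mu))). lra. Qed.

Lemma f_series mu t : mu <> 0 -> Rabs t < rq mu -> deg_bern_gf mu t = PSeries (pinv (qc mu)) t.
Proof.
  intros Hmu Ht. unfold deg_bern_gf. destruct (Req_EM_T t 0) as [->|Hne].
  - rewrite PSeries_0, pinv_0, qc_0. field.
  - rewrite e_decomp by (auto; apply rq_rmu; exact Ht).
    pose proof (Q_recip mu t Ht) as H.
    assert (HQ : PSeries (qc mu) t <> 0) by (intros E; rewrite E in H; lra).
    replace (1 + t * PSeries (qc mu) t - 1) with (t * PSeries (qc mu) t) by ring.
    apply (Rmult_eq_reg_l (PSeries (qc mu) t)); [|exact HQ].
    rewrite H. field. split; assumption.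
Qed.

Lemma loc0 (P : R -> Prop) r : 0 < r -> (forall t, Rabs t < r -> P t) -> locally 0 P.
Proof.
  intros Hr H. exists (mkposreal r Hr). intros y Hy. apply H.
  change (Rabs (y - 0) < r) in Hy. rewrite Rminus_0_r in Hy. exact Hy.
Qed.

Lemma pinvq_rad mu : Rbar_lt 0 (CV_radius (pinv (qc mu))).
Proof.
  pose proof (recip_rad (qc mu) (1 + Rabs mu) (1 + Rabs mu) (qc_ne0 mu) (L_pos mu) (L_pos mu)
    (qc_bound mu) 0) as H.
  rewrite Rabs_R0 in H. apply H.
  apply Rinv_0_lt_compat. apply recK_pos; [apply qc_ne0|apply L_pos|apply L_pos].
Qed.

Lemma bern_coef mu n : mu <> 0 ->
  deg_bernoulli n mu = pinv (qc mu) n * INR (Factorial.fact n).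
Proof.
  intros Hmu. unfold deg_bernoulli.
  rewrite (Derive_n_ext_loc _ (PSeries (pinv (qc mu)))).
  - apply Derive_n_coef. apply pinvq_rad.
  - apply (loc0 _ (rq mu)); [apply rq_pos|]. intros t Ht. apply f_series; assumption.
Qed.

Lemma e_half lam t : lam <> 0 -> 0 < 1 + lam * t ->
  e_deg (lam / 2) (2 * t) = (e_deg lam t) ^ 2.
Proof.
  intros Hl Hp. unfold e_deg.
  replace (1 + lam / 2 * (2 * t)) with (1 + lam * t) by field.
  replace (/ (lam / 2)) with (/ lam * INR 2) by (simpl; field; exact Hl).
  rewrite <- Rpower_mult. rewrite Rpower_pow; [reflexivity|].
  unfold Rpower; apply exp_pos.
Qed.

Lemma alg lam t : lam <> 0 -> Rabs t < rq lam ->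
  deg_bern_gf lam t - deg_bern_gf (lam / 2) (2 * t) = t / (1 + e_deg lam t).
Proof.
  intros Hl Ht.
  pose proof (rq_rmu lam t Ht) as Ht1.
  pose proof (rmu_pos_base lam t Ht1) as Hp.
  assert (He : 0 < e_deg lam t) by (unfold e_deg, Rpower; apply exp_pos).
  unfold deg_bern_gf.
  destruct (Req_EM_T t 0) as [->|Hne].
  - rewrite Rmult_0_r. destruct (Req_EM_T 0 0) as [_|C]; [|lra]. field. lra.
  - destruct (Req_EM_T (2 * t) 0) as [E|_]; [lra|].
    rewrite e_half by assumption.
    assert (He1 : e_deg lam t - 1 <> 0).
    { rewrite e_decomp by assumption.
      pose proof (Q_recip lam t Ht) as H.
      assert (HQ : PSeries (qc lam) t <> 0) by (intros E; rewrite E in H; lra).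
      replace (1 + t * PSeries (qc lam) t - 1) with (t * PSeries (qc lam) t) by ring.
      apply Rmult_integral_contrapositive; split; assumption. }
    assert (He2 : e_deg lam t ^ 2 - 1 <> 0).
    { replace (e_deg lam t ^ 2 - 1) with ((e_deg lam t - 1) * (e_deg lam t + 1)) by ring.
      apply Rmult_integral_contrapositive; split; [assumption|lra]. }
    field. repeat split; try assumption; lra.
Qed.

Lemma Dc_bound lam n : Rabs (Dc lam n) <= 2 * (1 + Rabs lam) ^ n.
Proof.
  destruct n as [|n].
  - simpl. rewrite Rabs_pos_eq; lra.
  - simpl Dc. pose proof (bet_bound lam (S n)). pose proof (pow_le (1 + Rabs lam) (S n)).
    pose proof (Rabs_pos lam). assert (0 <= 1 + Rabs lam) by lra. specialize (H0 H2). lra.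
Qed.

Lemma Dc_ne0 lam : Dc lam 0 <> 0.
Proof. simpl; lra. Qed.

Lemma Dc_series lam t : lam <> 0 -> Rabs t < rmu lam -> Rabs t < / recK (Dc lam) 2 (1 + Rabs lam) ->
  1 + e_deg lam t = PSeries (Dc lam) t.
Proof.
  intros Hl Ht Ht2. rewrite e_decomp by assumption.
  rewrite (PSeries_decr_1 (Dc lam)).
  - change (PSeries (PS_decr_1 (Dc lam)) t) with (PSeries (qc lam) t). simpl Dc. ring.
  - apply CV_radius_inside.
    apply (recip_rad (Dc lam) 2 (1 + Rabs lam) (Dc_ne0 lam) ltac:(lra) (L_pos lam) (Dc_bound lam)).
    exact Ht2.
Qed.

Lemma pinv_bound1 mu n : Rabs (pinv (qc mu) n) <= 1 * (recK (qc mu) (1 + Rabs mu) (1 + Rabs mu)) ^ n.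
Proof.
  pose proof (pinv_bound (qc mu) (1 + Rabs mu) (1 + Rabs mu) (qc_ne0 mu) (L_pos mu) (L_pos mu) (qc_bound mu) n) as H.
  unfold recK. rewrite qc_0, Rabs_R1 in *. rewrite Rinv_1 in H. exact H.
Qed.

Lemma recKq_pos mu : 0 < recK (qc mu) (1 + Rabs mu) (1 + Rabs mu).
Proof. apply recK_pos; [apply qc_ne0|apply L_pos|apply L_pos]. Qed.

Lemma coef_rel lam n : lam <> 0 ->
  pinv (qc lam) (S n) - 2 ^ (S n) * pinv (qc (lam / 2)) (S n) = pinv (Dc lam) n.
Proof.
  intros Hl.
  assert (Hl2 : lam / 2 <> 0) by (unfold Rdiv; apply Rmult_integral_contrapositive; split; [exact Hl|lra]).
  set (KA := recK (qc lam) (1 + Rabs lam) (1 + Rabs lam)).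
  set (KB := recK (qc (lam / 2)) (1 + Rabs (lam / 2)) (1 + Rabs (lam / 2))).
  set (KD := recK (Dc lam) 2 (1 + Rabs lam)).
  assert (HKA : 0 < KA) by apply recKq_pos.
  assert (HKB : 0 < KB) by apply recKq_pos.
  assert (HKD : 0 < KD) by (apply recK_pos; [apply Dc_ne0|lra|apply L_pos]).
  set (a := fun n => pinv (qc lam) n - 2 ^ n * pinv (qc (lam / 2)) n).
  assert (Ha : forall n, Rabs (a n) <= 2 * (KA + 2 * KB) ^ n).
  { intros m. unfold a. eapply Rle_trans; [apply Rabs_triang|]. rewrite Rabs_Ropp, Rabs_mult.
    pose proof (pinv_bound1 lam m) as H1. pose proof (pinv_bound1 (lam / 2) m) as H2.
    fold KA in H1. fold KB in H2.
    rewrite <- RPow_abs, (Rabs_pos_eq 2) by lra.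
    assert (KA ^ m <= (KA + 2 * KB) ^ m) by (apply pow_incr; lra).
    assert (2 ^ m * KB ^ m <= (KA + 2 * KB) ^ m)
      by (rewrite <- Rpow_mult_distr; apply pow_incr; lra).
    assert (0 <= 2 ^ m) by (apply pow_le; lra).
    assert (Rabs (pinv (qc (lam / 2)) m) * 2 ^ m <= KB ^ m * 2 ^ m) by (apply Rmult_le_compat_r; lra).
    lra. }
  change (a (S n) = PS_incr_1 (pinv (Dc lam)) (S n)).
  apply PSeries_ext_recip.
  - pose proof (radius_bound a 2 (KA + 2 * KB) ltac:(lra) Ha 0) as H. rewrite Rabs_R0 in H.
    apply H. apply Rinv_0_lt_compat; lra.
  - rewrite CV_radius_incr_1.
    pose proof (recip_rad (Dc lam) 2 (1 + Rabs lam) (Dc_ne0 lam) ltac:(lra) (L_pos lam) (Dc_bound lam) 0) as H.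
    rewrite Rabs_R0 in H. apply H. fold KD. apply Rinv_0_lt_compat; lra.
  - set (r := Rmin (rq lam) (Rmin (rq (lam / 2) / 2) (/ KD))).
    assert (Hr : 0 < r).
    { unfold r. apply Rmin_pos; [apply rq_pos|apply Rmin_pos].
      - pose proof (rq_pos (lam / 2)); lra.
      - apply Rinv_0_lt_compat; lra. }
    apply (loc0 _ r Hr). intros t Ht.
    assert (T1 : Rabs t < rq lam) by (unfold r in Ht; pose proof (Rmin_l (rq lam) (Rmin (rq (lam / 2) / 2) (/ KD))); lra).
    assert (T2 : Rabs t < rq (lam / 2) / 2).
    { unfold r in Ht. pose proof (Rmin_r (rq lam) (Rmin (rq (lam / 2) / 2) (/ KD))).
      pose proof (Rmin_l (rq (lam / 2) / 2) (/ KD)). lra. }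
    assert (T3 : Rabs t < / KD).
    { unfold r in Ht. pose proof (Rmin_r (rq lam) (Rmin (rq (lam / 2) / 2) (/ KD))).
      pose proof (Rmin_r (rq (lam / 2) / 2) (/ KD)). lra. }
    assert (T2' : Rabs (2 * t) < rq (lam / 2)).
    { rewrite Rabs_mult, Rabs_pos_eq by lra. lra. }
    transitivity (deg_bern_gf lam t - deg_bern_gf (lam / 2) (2 * t)).
    + rewrite (f_series lam t Hl T1), (f_series (lam / 2) (2 * t) Hl2 T2').
      unfold a.
      rewrite (PSeries_ext _ (PS_minus (pinv (qc lam)) (fun n => 2 ^ n * pinv (qc (lam / 2)) n)))
        by (intros; reflexivity).
      rewrite PSeries_minus.
      * f_equal. unfold PSeries. apply Series_ext. intros m. rewrite Rpow_mult_distr. ring.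
      * apply CV_radius_inside.
        apply (recip_rad (qc lam) (1 + Rabs lam) (1 + Rabs lam) (qc_ne0 lam) (L_pos lam) (L_pos lam) (qc_bound lam)).
        unfold rq in T1. pose proof (Rmin_r (rmu lam) (/ recK (qc lam) (1 + Rabs lam) (1 + Rabs lam))). lra.
      * apply CV_radius_inside.
        apply (radius_bound _ 1 (2 * KB)); [lra| |].
        -- intros m. rewrite Rabs_mult, <- RPow_abs, (Rabs_pos_eq 2) by lra.
           pose proof (pinv_bound1 (lam / 2) m) as H2. fold KB in H2.
           rewrite Rpow_mult_distr.
           assert (0 <= 2 ^ m) by (apply pow_le; lra). nra.
        -- assert (rq (lam / 2) <= / KB) by (unfold rq, KB; apply Rmin_r).
           rewrite Rinv_mult. lra.
    + rewrite alg by assumption.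
      rewrite PSeries_incr_1.
      rewrite (Dc_series lam t Hl (rq_rmu lam t T1) T3).
      pose proof (recip_eq (Dc lam) 2 (1 + Rabs lam) (Dc_ne0 lam) ltac:(lra) (L_pos lam) (Dc_bound lam) t T3) as H.
      assert (HQ : PSeries (Dc lam) t <> 0) by (intros E; rewrite E in H; lra).
      assert (Hinv : PSeries (pinv (Dc lam)) t = / PSeries (Dc lam) t).
      { apply (Rmult_eq_reg_l (PSeries (Dc lam) t)); [|exact HQ]. rewrite H. field. exact HQ. }
      rewrite Hinv. unfold Rdiv. ring.
Qed.

Lemma sum_final lam S2 n : is_deg_stirling2 lam S2 ->
  sum_f_R0 (fun k => (-1) ^ k * / 2 ^ (k + 1) * INR (Stdlib.Arith.Factorial.fact k) * S2 n k) n
  = INR (Factorial.fact n) * cp lam n.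
Proof.
  intros HS. unfold cp. rewrite scal_sum. apply sum_eq; intros k Hk.
  replace (wk k * Ek lam k n * INR (Factorial.fact n)) with (wk k * (Ek lam k n * INR (Factorial.fact n))) by ring.
  rewrite (Ek_S2 lam S2 k n HS).
  rewrite (proj2 (Nat.leb_le k n) Hk). unfold wk, Rdiv. ring.
Qed.

Theorem theorem13 (lam : R) (S2 : nat -> nat -> R) (n : nat) :
  lam <> 0 ->
  is_deg_stirling2 lam S2 ->
  sum_f_R0 (fun k => (-1) ^ k * / 2 ^ (k + 1) * INR (Stdlib.Arith.Factorial.fact k) * S2 n k) n
  = / INR (n + 1) *
    (deg_bernoulli (n + 1) lam - 2 ^ (n + 1) * deg_bernoulli (n + 1) (lam / 2)).
Proof.
  intros Hl HS.
  assert (Hl2 : lam / 2 <> 0) by (unfold Rdiv; apply Rmult_integral_contrapositive; split; [exact Hl|lra]).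
  rewrite sum_final with (lam := lam) by exact HS.
  rewrite !Nat.add_1_r.
  rewrite (bern_coef lam (S n) Hl), (bern_coef (lam / 2) (S n) Hl2).
  replace (pinv (qc lam) (S n) * INR (Factorial.fact (S n)) -
           2 ^ S n * (pinv (qc (lam / 2)) (S n) * INR (Factorial.fact (S n))))
    with ((pinv (qc lam) (S n) - 2 ^ S n * pinv (qc (lam / 2)) (S n)) * INR (Factorial.fact (S n)))
    by ring.
  rewrite coef_rel by exact Hl.
  rewrite (inv_unique (Dc lam) (pinv (Dc lam)) (cp lam) (Dc_ne0 lam)
             (pinv_inv _ (Dc_ne0 lam)) (cp_inv lam S2 HS) n).
  rewrite fact_simpl, mult_INR. field. apply not_0_INR; lia.
Qed.
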